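(* For a $*$-ring $R$ the following are equivalent: (1) $R$ is a generalized p.q.-Baer $*$-ring; (2) $R$ has a unity, and for every $x\in R$ there exist a central projection $e$ and $n\in\mathbb N$ such that $r_R((xR)^n)=r_R((eR)^n)$.
   Context: A $*$-ring is a ring with an involution; a projection is $e$ with $e=e^*=e^2$. $r_R(S)=\{a\in R: sa=0\ \forall s\in S\}$. $R$ is a generalized p.q.-Baer $*$-ring if for every $x\in R$ there are $n\in\mathbb N$ and a projection $e$ with $r_R((xR)^n)=eR$ (equivalently, for every principal ideal $I$, $r_R(I^n)=eR$ for some $n$ and projection $e$). *)

(* Defs.v *)
(* A *-ring is modelled as an additive group V (zmodType)
   with an associative, bi-distributive multiplication [mul] (NOT assumed
   unital: the existence of a unity is part of the theorem's conclusion)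
   and an involution [star]. *)
From mathcomp Require Import all_boot all_algebra.
Set Implicit Arguments. Unset Strict Implicit. Unset Printing Implicit Defensive.
Import GRing.Theory.
Local Open Scope ring_scope.

Section StarRing.
Variable V : zmodType.
Variables (mul : V -> V -> V) (star : V -> V).

Definition is_star_ring : Prop :=
  [/\ associative mul,
      left_distributive mul +%R
    & right_distributive mul +%R] /\
  [/\ involutive star,
      (forall x y, star (x + y) = star x + star y)
    & (forall x y, star (mul x y) = mul (star y) (star x))].

Definition has_unity : Prop :=
  exists u : V, forall x, mul u x = x /\ mul x u = x.

Definition is_projection (e : V) : Prop := star e = e /\ mul e e = e.

Definition is_central (e : V) : Prop := forall y, mul e y = mul y e.

Definition rset (x : V) (a : V) : Prop := exists r, a = mul x r.

(* r_R((xR)^n): a is annihilated on the right by every product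
   (x r_1)(x r_2)...(x r_n); the product is bracketed to the right,
   which is harmless as mul is associative. *)
Definition rann_pow (x : V) (n : nat) (a : V) : Prop :=
  forall rs : seq V, size rs = n ->
    foldr (fun r acc => mul (mul x r) acc) a rs = 0.

Definition gen_pq_baer : Prop :=
  forall x : V, exists n : nat, (0 < n)%N /\
    exists e : V, is_projection e /\
      forall a, rann_pow x n a <-> rset e a.

End StarRing.

(* Main.v *)
Require Import Defs.
From mathcomp Require Import all_boot all_algebra.
Set Implicit Arguments. Unset Strict Implicit. Unset Printing Implicit Defensive.
Import GRing.Theory.
Local Open Scope ring_scope.

Lemma mul0l_ (V : zmodType) (mul : V -> V -> V) :
  left_distributive mul +%R -> forall r, mul 0 r = 0.
Proof.
move=> ld r; have h := ld 0 0 r; rewrite addr0 in h.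
by apply: (addrI (mul 0 r)); rewrite addr0 -h.
Qed.

Lemma mul0r_ (V : zmodType) (mul : V -> V -> V) :
  right_distributive mul +%R -> forall r, mul r 0 = 0.
Proof.
move=> rd r; have h := rd r 0 0; rewrite addr0 in h.
by apply: (addrI (mul r 0)); rewrite addr0 -h.
Qed.

Lemma mulBl_ (V : zmodType) (mul : V -> V -> V) :
  left_distributive mul +%R -> forall a b c, mul (a - b) c = mul a c - mul b c.
Proof.
move=> ld a b c; rewrite ld; congr (_ + _).
by apply: (addrI (mul b c)); rewrite -ld !subrr mul0l_.
Qed.

Lemma mulBr_ (V : zmodType) (mul : V -> V -> V) :
  right_distributive mul +%R -> forall a b c, mul c (a - b) = mul c a - mul c b.
Proof.
move=> rd a b c; rewrite rd; congr (_ + _).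
by apply: (addrI (mul c b)); rewrite -rd !subrr mul0r_.
Qed.

Lemma starB_ (V : zmodType) (star : V -> V) :
  (forall x y, star (x + y) = star x + star y) ->
  forall a b, star (a - b) = star a - star b.
Proof.
move=> sa a b.
have s0 : star 0 = 0.
  have h := sa 0 0; rewrite addr0 in h.
  by apply: (addrI (star 0)); rewrite addr0 -h.
rewrite sa; congr (_ + _).
by apply: (addrI (star b)); rewrite -sa !subrr.
Qed.

Lemma rann_central (V : zmodType) (mul : V -> V -> V) (u e : V) n a :
  associative mul -> right_distributive mul +%R ->
  (forall x, mul u x = x /\ mul x u = x) ->
  mul e e = e -> is_central mul e -> (0 < n)%N ->
  (rann_pow mul e n a <-> mul e a = 0).
Proof.
move=> hA rd hu ee ce n0; split.
- move=> H; have := H (nseq n u); rewrite size_nseq => /(_ erefl).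
  case: n n0 {H} => // k _.
  suff -> : foldr (fun r acc => mul (mul e r) acc) a (nseq k.+1 u) = mul e a by [].
  elim: k => [|k IH] /=; first by rewrite (proj2 (hu e)).
  by rewrite /= in IH; rewrite IH (proj2 (hu e)) hA ee.
- move=> ea rs hs.
  have P : forall rs, mul e (foldr (fun r acc => mul (mul e r) acc) a rs) = 0.
    elim=> [|r s IH] //=.
    by rewrite hA hA ee (ce r) -hA IH mul0r_.
  case: rs hs => [|r s] /= hs; first by rewrite -hs in n0.
  by rewrite (ce r) -hA P mul0r_.
Qed.

Lemma rset_sub (V : zmodType) (mul : V -> V -> V) (u p a : V) :
  associative mul -> left_distributive mul +%R -> right_distributive mul +%R ->
  (forall x, mul u x = x /\ mul x u = x) -> mul p p = p ->
  (rset mul (u - p) a <-> mul p a = 0).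
Proof.
move=> hA ld rd hu pp; split.
- case=> r ->; by rewrite hA mulBr_ // pp (proj2 (hu p)) subrr mul0l_.
- move=> pa; exists a; by rewrite mulBl_ // pa subr0 (proj1 (hu a)).
Qed.

Lemma star_unit (V : zmodType) (mul : V -> V -> V) (star : V -> V) (u : V) :
  involutive star -> (forall x y, star (mul x y) = mul (star y) (star x)) ->
  (forall x, mul u x = x /\ mul x u = x) -> star u = u.
Proof.
move=> inv sm hu.
have h := sm (star u) u.
rewrite inv !(proj2 (hu (star u))) inv in h.
by rewrite -h.
Qed.

Lemma proj_sub (V : zmodType) (mul : V -> V -> V) (star : V -> V) (u p : V) :
  is_star_ring mul star -> (forall x, mul u x = x /\ mul x u = x) ->
  is_projection mul star p -> is_projection mul star (u - p).
Proof.
move=> [[hA ld rd] [inv sa sm]] hu [sp pp]; split.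
- by rewrite starB_ // sp (star_unit inv sm hu).
- rewrite mulBl_ // !mulBr_ // pp (proj1 (hu u)) (proj1 (hu p)) (proj2 (hu p)).
  by rewrite subrr subr0.
Qed.

Lemma central_sub (V : zmodType) (mul : V -> V -> V) (u p : V) :
  left_distributive mul +%R -> right_distributive mul +%R ->
  (forall x, mul u x = x /\ mul x u = x) ->
  is_central mul p -> is_central mul (u - p).
Proof.
move=> ld rd hu cp y.
by rewrite mulBl_ // mulBr_ // (proj1 (hu y)) (proj2 (hu y)) cp.
Qed.

Lemma rann_left (V : zmodType) (mul : V -> V -> V) x n a s :
  associative mul -> (0 < n)%N ->
  rann_pow mul x n a -> rann_pow mul x n (mul s a).
Proof.
move=> hA n0 H rs.
case/lastP: rs => [|rs r] hs; first by rewrite -hs in n0.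
rewrite foldr_rcons hA -(hA x r s).
have := H (rcons rs (mul r s)); rewrite -hs !size_rcons => /(_ erefl).
by rewrite foldr_rcons.
Qed.

Theorem mainTheorem7 (V : zmodType) (mul : V -> V -> V) (star : V -> V) :
  is_star_ring mul star ->
  (gen_pq_baer mul star <->
   (has_unity mul /\
    forall x : V, exists e : V, exists n : nat,
      [/\ is_projection mul star e, is_central mul e, (0 < n)%N &
          forall a, rann_pow mul x n a <-> rann_pow mul e n a])).
Proof.
move=> SR; have SR' := SR; move: SR' => [[hA ld rd] [inv sa sm]].
split.
- move=> G.
  have [n0 [n0p [u [[su uu] Hu]]]] := G 0.
  have hl : forall a, mul u a = a.
    move=> a.
    have [r ->] : rset mul u a.
      apply/(Hu a) => rs hs.
      case: rs hs => [|r s] /= hs; first by rewrite -hs in n0p.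
      by rewrite !mul0l_.
    by rewrite hA uu.
  have hu : forall x, mul u x = x /\ mul x u = x.
    move=> x; split; first exact: hl.
    have k := f_equal star (hl (star x)).
    by rewrite sm inv su in k.
  split; first by exists u.
  move=> x; have [n [np [f [[sf ff] Hf]]]] := G x.
  have key : forall y, mul y f = mul f (mul y f).
    move=> y.
    have [r ->] : rset mul f (mul y f).
      apply/Hf; apply: rann_left => //; apply/Hf; by exists f.
    by rewrite hA ff.
  have cf : is_central mul f.
    move=> y; have k := f_equal star (key (star y)).
    rewrite !sm inv sf in k.
    by rewrite k -hA -key.
  have pf : is_projection mul star (u - f) by apply: proj_sub.
  exists (u - f), n; split => //; first exact: central_sub.
  move=> a; apply: (iff_trans (Hf a)); apply: iff_sym.
  have pp : mul (u - f) (u - f) = u - f by case: pf.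
  apply: (iff_trans (@rann_central V mul u (u - f) n a hA rd hu pp
     (central_sub ld rd hu cf) np)).
  have eq : u - (u - f) = f by rewrite opprB addrC subrK.
  have := @rset_sub V mul u (u - f) a hA ld rd hu pp; rewrite eq => h.
  exact: iff_sym h.
- move=> [[u hu] H] x.
  have [e [n [[se ee] ce np He]]] := H x.
  exists n; split => //; exists (u - e); split; first by apply: proj_sub.
  move=> a; apply: (iff_trans (He a)).
  apply: (iff_trans (@rann_central V mul u e n a hA rd hu ee ce np)).
  by apply: iff_sym; apply: rset_sub.
Qed.
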